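(* Let $\Gamma=\langle x,y,z\mid xy^{-1}=zx^{-1},\ yz^{-1}=zy^{-1}\rangle$ with generating set $\Delta=\{x,y,z\}$. Then $W=W_xU_x+W_yU_y+W_zU_z$ is a homogeneous scalar quantum walk on $C_\Delta(\Gamma)$ if and only if, up to a global phase, $W_x=\cos\phi$, $W_y=\frac{1+i(-1)^q}{2}\sin\phi$, $W_z=-\frac{1-i(-1)^q}{2}\sin\phi$ for some real $\phi$ and some integer $q$ (with these values nonzero). In particular such a walk exists.
   Context: The Cayley graph $C_\Delta(\Gamma)$ has vertex set $\Gamma$ and directed edges $(g,g\delta)$, $g\in\Gamma,\delta\in\Delta$. Let $\ell^2(\Gamma)$ have orthonormal basis $\{|g\rangle\}_{g\in\Gamma}$ and for $\delta\in\Gamma$ let $U_\delta|g\rangle=|g\delta\rangle$. A homogeneous scalar quantum walk on $C_\Delta(\Gamma)$ is a unitary operator $W=\sum_{\delta\in\Delta}W_\delta U_\delta$ with all complex coefficients $W_\delta$ nonzero. ''Up to a global phase'' means that all coefficients may be multiplied by a common complex number of modulus one. *)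

(* Defs.v *)
From Stdlib Require Import Reals ZArith.
From Coquelicot Require Import Coquelicot.

Record Grp := {
  carrier :> Type;
  gmul : carrier -> carrier -> carrier;
  ginv : carrier -> carrier;
  gone : carrier;
  gmulA : forall a b c, gmul a (gmul b c) = gmul (gmul a b) c;
  gmul1 : forall a, gmul gone a = a;
  gmulV : forall a, gmul (ginv a) a = gone
}.

Definition is_hom (G H : Grp) (f : G -> H) : Prop :=
  forall a b : G, f (gmul G a b) = gmul H (f a) (f b).

Definition gamma_rel (H : Grp) (a b c : H) : Prop :=
  gmul H a (ginv H b) = gmul H c (ginv H a) /\
  gmul H b (ginv H c) = gmul H c (ginv H b).

(* (G; x, y, z) is the group presented by <x,y,z | xy^-1 = zx^-1, yz^-1 = zy^-1>,
   characterised by its universal property. *)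
Definition is_Gamma (G : Grp) (x y z : G) : Prop :=
  gamma_rel G x y z /\
  (forall (H : Grp) (a b c : H), gamma_rel H a b c ->
     exists f : G -> H, is_hom G H f /\ f x = a /\ f y = b /\ f z = c) /\
  (forall (H : Grp) (f g : G -> H), is_hom G H f -> is_hom G H g ->
     f x = g x -> f y = g y -> f z = g z -> forall t, f t = g t).

(* Vectors are complex functions on G; |h> is the indicator of h.
   U_d |h> = |h d>, i.e. (U_d psi)(g) = psi (g d^-1). *)
Definition shift (G : Grp) (d : G) (psi : G -> C) : G -> C :=
  fun g => psi (gmul G g (ginv G d)).

Definition walk (G : Grp) (x y z : G) (wx wy wz : C) (psi : G -> C) : G -> C :=
  fun g => (wx * shift G x psi g + wy * shift G y psi g + wz * shift G z psi g)%C.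

(* Its Hilbert-space adjoint W^* = conj(W_x) U_x^{-1} + ..., using U_d^* = U_{d^-1}. *)
Definition walk_adj (G : Grp) (x y z : G) (wx wy wz : C) (psi : G -> C) : G -> C :=
  fun g => (Cconj wx * shift G (ginv G x) psi g + Cconj wy * shift G (ginv G y) psi g
            + Cconj wz * shift G (ginv G z) psi g)%C.

Definition walk_unitary (G : Grp) (x y z : G) (wx wy wz : C) : Prop :=
  forall psi : G -> C,
    walk_adj G x y z wx wy wz (walk G x y z wx wy wz psi) = psi /\
    walk G x y z wx wy wz (walk_adj G x y z wx wy wz psi) = psi.

Definition hsqw (G : Grp) (x y z : G) (wx wy wz : C) : Prop :=
  walk_unitary G x y z wx wy wz /\ wx <> 0%C /\ wy <> 0%C /\ wz <> 0%C.

(* Main.v *)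
Require Import Defs.
From Stdlib Require Import Reals ZArith.
From Coquelicot Require Import Coquelicot.
From Stdlib Require Import Lra Psatz FunctionalExtensionality.


Section GL.
Variable G : Grp.
Notation m := (gmul G). Notation i := (ginv G). Notation e := (gone G).
Lemma g_mulr_inv a : m a (i a) = e.
Proof.
  rewrite <- (gmul1 G (m a (i a))).
  rewrite <- (gmulV G (i a)) at 1.
  rewrite <- gmulA, (gmulA G (i a) a), gmulV, gmul1. apply gmulV.
Qed.
Lemma g_mul1r a : m a e = a.
Proof. rewrite <- (gmulV G a), gmulA, g_mulr_inv. apply gmul1. Qed.
Lemma g_invK a : i (i a) = a.
Proof.
  rewrite <- (g_mul1r (i (i a))), <- (gmulV G a), gmulA, gmulV. apply gmul1.
Qed.
Lemma g_inv_uniq c d : m c d = e -> c = i d.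
Proof.
  intro H. rewrite <- (g_mul1r c), <- (g_mulr_inv d), gmulA, H. apply gmul1.
Qed.
Lemma g_invM a b : i (m a b) = m (i b) (i a).
Proof.
  symmetry; apply g_inv_uniq.
  rewrite <- !gmulA, (gmulA G (i a) a), gmulV, gmul1. apply gmulV.
Qed.
End GL.

Inductive Z4 := e0 | e1 | e2 | e3.
Definition z4add (a b : Z4) : Z4 :=
  match a, b with
  | e0, b => b
  | a, e0 => a
  | e1, e1 => e2 | e1, e2 => e3 | e1, e3 => e0
  | e2, e1 => e3 | e2, e2 => e0 | e2, e3 => e1
  | e3, e1 => e0 | e3, e2 => e1 | e3, e3 => e2
  end.
Definition z4neg (a : Z4) : Z4 :=
  match a with e0 => e0 | e1 => e3 | e2 => e2 | e3 => e1 end.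
Definition Z4G : Grp.
Proof.
  refine (@Build_Grp Z4 (fun a b => z4add a b) z4neg e0 _ _ _).
  - intros [] [] []; reflexivity.
  - intros []; reflexivity.
  - intros []; reflexivity.
Defined.

Lemma hom_one (G : Grp) (f : G -> Z4G) : is_hom G Z4G f -> f (gone G) = e0.
Proof.
  intro H. pose proof (H (gone G) (gone G)) as E. rewrite gmul1 in E.
  simpl in E. destruct (f (gone G)); simpl in E; congruence.
Qed.
Lemma hom_inv (G : Grp) (f : G -> Z4G) a : is_hom G Z4G f -> f (ginv G a) = z4neg (f a).
Proof.
  intro H. pose proof (H (ginv G a) a) as E. rewrite gmulV, (hom_one G f H) in E.
  simpl in E. destruct (f (ginv G a)), (f a); simpl in E; try congruence; reflexivity.
Qed.

Close Scope C_scope.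


Section Rel.
Variable G : Grp.
Variables x y z : G.
Hypothesis R : gamma_rel G x y z.
Notation m := (gmul G). Notation i := (ginv G). Notation e := (gone G).

Lemma E3 : m y (i x) = m x (i z).
Proof.
  destruct R as [R1 _]. pose proof (f_equal i R1) as E.
  rewrite !g_invM, !g_invK in E. auto.
Qed.
Lemma zdef : z = m (m x (i y)) x.
Proof.
  destruct R as [R1 _]. rewrite R1, <- gmulA, gmulV. symmetry; apply g_mul1r.
Qed.
Lemma W1 : m (i y) x = m (i x) z.
Proof.
  rewrite zdef. rewrite <- !gmulA, (gmulA G (i x) x), gmulV, gmul1. reflexivity.
Qed.
Lemma W2 : m (i x) y = m (i z) x.
Proof.
  pose proof (f_equal i W1) as E. rewrite !g_invM, !g_invK in E. auto.
Qed.
Lemma W3 : m (i y) z = m (i z) y.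
Proof.
  destruct R as [_ R2].
  rewrite <- (g_mul1r G z) at 1. rewrite <- (gmulV G y), (gmulA G z (i y) y), <- R2.
  rewrite !gmulA, gmulV, gmul1. reflexivity.
Qed.
End Rel.

Open Scope C_scope.

Lemma unitary_of_coeffs (G : Grp) (x y z : G) (R : gamma_rel G x y z) (wx wy wz : C) :
  Cconj wx * wx + Cconj wy * wy + Cconj wz * wz = 1 ->
  Cconj wx * wy + Cconj wz * wx = 0 ->
  Cconj wy * wx + Cconj wx * wz = 0 ->
  Cconj wy * wz + Cconj wz * wy = 0 ->
  walk_unitary G x y z wx wy wz.
Proof.
  intros Hn H1 H1' H2 psi. split; apply functional_extensionality; intro g;
  unfold walk_adj, walk, Defs.shift; cbv beta; rewrite !g_invK, <- !gmulA.
  - pose proof R as [R1 R2]. rewrite <- R1, <- R2, (E3 G x y z R), !g_mulr_inv, !g_mul1r.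
    transitivity (psi g * (Cconj wx * wx + Cconj wy * wy + Cconj wz * wz)
      + psi (gmul G g (gmul G x (ginv G y))) * (Cconj wx * wy + Cconj wz * wx)
      + psi (gmul G g (gmul G x (ginv G z))) * (Cconj wy * wx + Cconj wx * wz)
      + psi (gmul G g (gmul G y (ginv G z))) * (Cconj wy * wz + Cconj wz * wy)).
    + ring.
    + rewrite Hn, H1, H1', H2. ring.
  - rewrite <- (W1 G x y z R), <- (W2 G x y z R), <- (W3 G x y z R), !gmulV, !g_mul1r.
    transitivity (psi g * (Cconj wx * wx + Cconj wy * wy + Cconj wz * wz)
      + psi (gmul G g (gmul G (ginv G y) x)) * (Cconj wx * wy + Cconj wz * wx)
      + psi (gmul G g (gmul G (ginv G x) y)) * (Cconj wy * wx + Cconj wx * wz)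
      + psi (gmul G g (gmul G (ginv G y) z)) * (Cconj wy * wz + Cconj wz * wy)).
    + ring.
    + rewrite Hn, H1, H1', H2. ring.
Qed.

Close Scope C_scope.

Open Scope C_scope.

Lemma ay_eq (s sn : R) : ((1 + Ci * RtoC s) / 2 * RtoC sn)%C = ((sn/2)%R, (s*sn/2)%R).
Proof.
  apply injective_projections; unfold Cdiv, Cinv, Cmult, Cplus, RtoC, Ci; simpl; field.
Qed.
Lemma az_eq (s sn : R) : (- ((1 - Ci * RtoC s) / 2) * RtoC sn)%C = ((-sn/2)%R, (s*sn/2)%R).
Proof.
  apply injective_projections; unfold Cdiv, Cinv, Cmult, Cplus, Cminus, Copp, RtoC, Ci; simpl; field.
Qed.

Lemma coeffs_basic (c sn s : R) : (c*c + sn*sn = 1)%R -> (s*s=1)%R ->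
  let ax := RtoC c in let ay := ((sn/2)%R, (s*sn/2)%R) : C in let az := ((-sn/2)%R, (s*sn/2)%R) : C in
  Cconj ax * ax + Cconj ay * ay + Cconj az * az = 1 /\
  Cconj ax * ay + Cconj az * ax = 0 /\
  Cconj ay * ax + Cconj ax * az = 0 /\
  Cconj ay * az + Cconj az * ay = 0.
Proof.
  intros H Hs ax ay az; subst ax ay az.
  repeat split; apply injective_projections; unfold Cconj, Cmult, Cplus, RtoC; simpl; nra.
Qed.

Lemma conj_scale (lam a b : C) : Cmod lam = 1%R ->
  Cconj (lam * a) * (lam * b) = Cconj a * b.
Proof.
  intro H. rewrite Cmult_conj.
  assert (E : lam * Cconj lam = 1). { rewrite <- Cmod2_conj, H. apply injective_projections; simpl; ring. }
  transitivity ((lam * Cconj lam) * (Cconj a * b)); [ring|]. rewrite E; ring.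
Qed.

Lemma powm1_sq (q : Z) : (powerRZ (-1) q * powerRZ (-1) q = 1)%R.
Proof.
  rewrite <- powerRZ_mult. replace (-1 * -1)%R with 1%R by ring. apply powerRZ_R1.
Qed.

Close Scope C_scope.

Open Scope C_scope.

Lemma necessity (wx wy wz : C) : wx <> 0 -> wy <> 0 -> wz <> 0 ->
  Cconj wx * wx + Cconj wy * wy + Cconj wz * wz = 1 ->
  Cconj wx * wy + Cconj wz * wx = 0 ->
  Cconj wy * wz + Cconj wz * wy = 0 ->
     exists (lam : C) (phi : R) (q : Z),
       Cmod lam = 1%R /\
       let s := RtoC (powerRZ (-1) q) in
       let ax := RtoC (cos phi) in
       let ay := ((1 + Ci * s) / 2 * RtoC (sin phi))%C in
       let az := (- ((1 - Ci * s) / 2) * RtoC (sin phi))%C in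
       wx = (lam * ax)%C /\ wy = (lam * ay)%C /\ wz = (lam * az)%C /\
       ax <> 0%C /\ ay <> 0%C /\ az <> 0%C.
Proof.
  intros Hx Hy Hz Hn H1 H2.
  set (r := Cmod wx).
  assert (Hr : (0 < r)%R) by (apply Cmod_gt_0; auto).
  assert (Hr0 : RtoC r <> 0).
  { intro E. apply (f_equal fst) in E. simpl in E. lra. }
  set (lam := wx / RtoC r).
  assert (Hlam : Cmod lam = 1%R).
  { unfold lam. rewrite Cmod_div by auto. rewrite Cmod_R, Rabs_pos_eq by lra.
    fold r. field. lra. }
  assert (Hwx : wx = lam * RtoC r) by (unfold lam; field; auto).
  clearbody lam.
  assert (Hll : lam * Cconj lam = 1).
  { rewrite <- Cmod2_conj, Hlam. apply injective_projections; simpl; ring. }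
  set (u := Cconj lam * wy).
  assert (Hwy : wy = lam * u).
  { unfold u. transitivity ((lam * Cconj lam) * wy); [rewrite Hll; ring | ring]. }
  clearbody u.
  set (v := Cconj lam * wz).
  assert (Hwz : wz = lam * v).
  { unfold v. transitivity ((lam * Cconj lam) * wz); [rewrite Hll; ring | ring]. }
  clearbody v. clearbody r.
  subst wx wy wz.
  repeat rewrite conj_scale in Hn by auto. repeat rewrite conj_scale in H1 by auto. repeat rewrite conj_scale in H2 by auto.
  destruct u as [u1 u2], v as [v1 v2].
  pose proof (f_equal fst Hn) as Hn1. pose proof (f_equal fst H1) as H11.
  pose proof (f_equal snd H1) as H12. pose proof (f_equal fst H2) as H21.
  unfold Cconj, Cmult, Cplus, RtoC in Hn1, H11, H12, H21; simpl in Hn1, H11, H12, H21.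
  assert (Ev1 : v1 = (- u1)%R).
  { apply (Rmult_eq_reg_l r); [lra | lra]. }
  assert (Ev2 : v2 = u2).
  { apply (Rmult_eq_reg_l r); [lra | lra]. }
  subst v1 v2.
  assert (Hsq : (u2 * u2 = u1 * u1)%R) by lra.
  assert (Hn' : (r * r + 4 * (u1 * u1) = 1)%R) by lra.
  assert (Hrange : (-1 <= 2 * u1 <= 1)%R) by nra.
  assert (Hsin : sin (asin (2 * u1)) = (2 * u1)%R) by (apply sin_asin; auto).
  assert (Hcos : cos (asin (2 * u1)) = r).
  { rewrite cos_asin by auto. replace (1 - (2 * u1)²)%R with (r * r)%R
      by (unfold Rsqr; lra). apply sqrt_square; lra. }
  assert (Hq : exists q : Z, (u2 = powerRZ (-1) q * u1)%R).
  { assert (E : ((u2 - u1) * (u2 + u1) = 0)%R) by lra.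
    apply Rmult_integral in E. destruct E as [E|E].
    - exists 0%Z. simpl. lra.
    - exists 1%Z. simpl. lra. }
  destruct Hq as [q Hq].
  pose proof (powm1_sq q) as Hs.
  remember (powerRZ (-1) q) as s eqn:Es.
  exists lam, (asin (2 * u1)), q. split; [exact Hlam|]. cbv zeta.
  rewrite <- Es, Hsin, Hcos, ay_eq, az_eq.
  assert (Hu : (u1, u2) = ((2 * u1 / 2)%R, (s * (2 * u1) / 2)%R) :> C).
  { apply injective_projections; simpl; field_simplify; lra. }
  assert (Hv : ((- u1)%R, u2) = ((- (2 * u1) / 2)%R, (s * (2 * u1) / 2)%R) :> C).
  { apply injective_projections; simpl; field_simplify; lra. }
  assert (Hu1 : u1 <> 0%R).
  { intro E. apply Hy. assert (u2 = 0%R) by nra. subst.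
    apply injective_projections; unfold Cmult; simpl; ring. }
  rewrite <- Hu, <- Hv.
  repeat split; auto.
  all: intro E; apply (f_equal fst) in E; simpl in E; lra.
Qed.

Close Scope C_scope.


Definition ind (k t : Z4) : C :=
  match k, t with
  | e0, e0 | e1, e1 | e2, e2 | e3, e3 => 1%C
  | _, _ => 0%C
  end.

Lemma coeffs_of_unitary (G : Grp) (x y z : G) (HG : is_Gamma G x y z) (wx wy wz : C) :
  walk_unitary G x y z wx wy wz ->
  (Cconj wx * wx + Cconj wy * wy + Cconj wz * wz = 1 /\
  Cconj wx * wy + Cconj wz * wx = 0 /\
  Cconj wy * wz + Cconj wz * wy = 0)%C.
Proof.
  intro HU. destruct HG as [_ [HU2 _]].
  destruct (HU2 Z4G e0 e3 e1) as [f [Hf [fx [fy fz]]]]; [split; reflexivity|].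
  assert (K : forall k, (Cconj wx * (wx * ind k (f (gmul G (gmul G (gone G) (ginv G (ginv G x))) (ginv G x))) + wy * ind k (f (gmul G (gmul G (gone G) (ginv G (ginv G x))) (ginv G y))) + wz * ind k (f (gmul G (gmul G (gone G) (ginv G (ginv G x))) (ginv G z)))) + Cconj wy * (wx * ind k (f (gmul G (gmul G (gone G) (ginv G (ginv G y))) (ginv G x))) + wy * ind k (f (gmul G (gmul G (gone G) (ginv G (ginv G y))) (ginv G y))) + wz * ind k (f (gmul G (gmul G (gone G) (ginv G (ginv G y))) (ginv G z)))) + Cconj wz * (wx * ind k (f (gmul G (gmul G (gone G) (ginv G (ginv G z))) (ginv G x))) + wy * ind k (f (gmul G (gmul G (gone G) (ginv G (ginv G z))) (ginv G y))) + wz * ind k (f (gmul G (gmul G (gone G) (ginv G (ginv G z))) (ginv G z)))) = ind k (f (gone G)))%C).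
  { intro k. destruct (HU (fun h => ind k (f h))) as [E _].
    exact (equal_f E (gone G)). }
  pose proof (K e0) as K0. pose proof (K e1) as K1. pose proof (K e2) as K2.
  rewrite !Hf, !(hom_inv G f _ Hf), !(hom_one G f Hf), fx, fy, fz in K0, K1, K2.
  simpl in K0, K1, K2.
  split; [|split].
  - rewrite <- K0. ring.
  - rewrite <- K1. ring.
  - rewrite <- K2. ring.
Qed.

Theorem mainTheorem5 (G : Grp) (x y z : G) (HG : is_Gamma G x y z) :
  (forall wx wy wz : C,
     hsqw G x y z wx wy wz <->
     exists (lam : C) (phi : R) (q : Z),
       Cmod lam = 1%R /\
       let s := RtoC (powerRZ (-1) q) in
       let ax := RtoC (cos phi) in
       let ay := ((1 + Ci * s) / 2 * RtoC (sin phi))%C in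
       let az := (- ((1 - Ci * s) / 2) * RtoC (sin phi))%C in
       wx = (lam * ax)%C /\ wy = (lam * ay)%C /\ wz = (lam * az)%C /\
       ax <> 0%C /\ ay <> 0%C /\ az <> 0%C) /\
  (exists wx wy wz : C, hsqw G x y z wx wy wz).
Proof.
  assert (main : forall wx wy wz : C,
     hsqw G x y z wx wy wz <->
     exists (lam : C) (phi : R) (q : Z),
       Cmod lam = 1%R /\
       let s := RtoC (powerRZ (-1) q) in
       let ax := RtoC (cos phi) in
       let ay := ((1 + Ci * s) / 2 * RtoC (sin phi))%C in
       let az := (- ((1 - Ci * s) / 2) * RtoC (sin phi))%C in
       wx = (lam * ax)%C /\ wy = (lam * ay)%C /\ wz = (lam * az)%C /\
       ax <> 0%C /\ ay <> 0%C /\ az <> 0%C).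
  { intros wx wy wz. split.
    - intros [HU [Hx [Hy Hz]]].
      destruct (coeffs_of_unitary G x y z HG wx wy wz HU) as [Hn [H1 H2]].
      apply necessity; auto.
    - intros [lam [phi [q [Hlam H]]]]. cbv zeta in H.
      destruct H as [Ex [Ey [Ez [Nx [Ny Nz]]]]].
      assert (Hl0 : lam <> 0%C).
      { intro E. rewrite E, Cmod_0 in Hlam. lra. }
      rewrite ay_eq in Ey, Ny. rewrite az_eq in Ez, Nz. subst wx wy wz.
      assert (Hcs : (cos phi * cos phi + sin phi * sin phi = 1)%R).
      { pose proof (sin2_cos2 phi) as E. unfold Rsqr in E. lra. }
      destruct (coeffs_basic (cos phi) (sin phi) (powerRZ (-1) q) Hcs (powm1_sq q))
        as [C0 [C1 [C2 C3]]].
      split; [|split; [|split]]; try (apply Cmult_neq_0; auto).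
      destruct HG as [R _].
      apply unitary_of_coeffs; auto; repeat rewrite conj_scale by auto; auto. }
  split; [exact main|].
  exists (RtoC (cos (PI/4))), (((1 + Ci * RtoC (powerRZ (-1) 0)) / 2 * RtoC (sin (PI/4)))%C),
    ((- ((1 - Ci * RtoC (powerRZ (-1) 0)) / 2) * RtoC (sin (PI/4)))%C).
  apply main. exists 1%C, (PI/4)%R, 0%Z. split; [apply Cmod_1|]. cbv zeta.
  assert (Hs2 : (0 < sqrt 2)%R) by (apply sqrt_lt_R0; lra).
  rewrite ay_eq, az_eq, cos_PI4, sin_PI4.
  repeat split; try ring.
  all: try (symmetry; apply Cmult_1_l).
  all: assert (P : (0 < 1 / sqrt 2)%R) by (apply Rdiv_lt_0_compat; lra).
  all: intro E; apply (f_equal fst) in E; simpl in E; lra.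
Qed.
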